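(* Let $m\ge 1$ and $n\ge 0$ be integers and let $M(h)$, $h\in(0,+\infty)$, be the first order Melnikov function of system $(1.1)_\epsilon$ described in the context. Then there exist real constants $\rho^{\pm}_{i,j}$ ($0\le i+j\le n$), depending on the coefficients of $p^\pm,q^\pm$, and a polynomial $\Phi$ of degree at most $m(n+1)$ such that $$M(h)=\sum_{i+j=0}^{n}\rho^{+}_{i,j}J_{i,j}(h)+\sum_{i+j=0}^{n}\rho^{-}_{i,j}I_{i,j}(h)+\Phi(u(h)),\qquad h\in(0,+\infty),$$ where $J_{i,j}(h)=\int_{L_h^+}x^iy^jdx$ and $I_{i,j}(h)=\int_{L_h^-}x^iy^jdx$.
   Context: System $(1.1)_\epsilon$: $\dot x=y+\epsilon p^{+}(x,y),\ \dot y=-x+\epsilon q^{+}(x,y)$ for $y\ge x^{m}$, and $\dot x=y+\epsilon p^{-}(x,y),\ \dot y=-x+\epsilon q^{-}(x,y)$ for $y<x^{m}$, where $p^{\pm}=\sum_{i+j=0}^{n}a^{\pm}_{i,j}x^iy^j$, $q^{\pm}=\sum_{i+j=0}^{n}b^{\pm}_{i,j}x^iy^j$ are real polynomials of degree $n$. For $h>0$ let $u=u(h)>0$ be the unique positive number with $u^2+u^{2m}=h$; the circle $x^2+y^2=h$ meets $y=x^m$ at $A=(-u,(-u)^m)$ and $B=(u,u^m)$. $L_h^{+}$ is the arc of this circle in $\{y\ge x^m\}$ traversed clockwise from $A$ to $B$, and $L_h^-$ the arc in $\{y\le x^m\}$ traversed clockwise from $B$ to $A$. The first order Melnikov function is $M(h)=\int_{L_h^+}q^+dx-p^+dy+\int_{L_h^-}q^-dx-p^-dy$.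 *)

(* Defs.v *)
From Stdlib Require Import Reals.
From Coquelicot Require Import Coquelicot.
Open Scope R_scope.

Definition poly2 (n : nat) (a : nat -> nat -> R) (x y : R) : R :=
  sum_f_R0 (fun i => sum_f_R0 (fun j => a i j * x ^ i * y ^ j) (n - i)) n.

Definition sum2 (n : nat) (F : nat -> nat -> R) : R :=
  sum_f_R0 (fun i => sum_f_R0 (fun j => F i j) (n - i)) n.

Definition poly1 (d : nat) (c : nat -> R) (t : R) : R :=
  sum_f_R0 (fun k => c k * t ^ k) d.

Definition lineint (P Q : R -> R -> R) (gx gy : R -> R) (a b : R) : R :=
  RInt (fun t => P (gx t) (gy t) * Derive gx t + Q (gx t) (gy t) * Derive gy t) a b.

(* Clockwise parametrization of the circle x^2+y^2 = h:
   theta |-> (sqrt h * sin theta, sqrt h * cos theta). *)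
Definition cx (h : R) (t : R) : R := sqrt h * sin t.
Definition cy (h : R) (t : R) : R := sqrt h * cos t.

(* Angles of A = (-u, (-u)^m) and B = (u, u^m) in this parametrization. *)
Definition angA (m : nat) (h u : R) : R := - acos ((- u) ^ m / sqrt h).
Definition angB (m : nat) (h u : R) : R := acos (u ^ m / sqrt h).

(* Line integral over L_h^+ (clockwise from A to B, through the top point). *)
Definition lint_plus (m : nat) (h u : R) (P Q : R -> R -> R) : R :=
  lineint P Q (cx h) (cy h) (angA m h u) (angB m h u).

(* Line integral over L_h^- (clockwise from B to A, through the bottom point). *)
Definition lint_minus (m : nat) (h u : R) (P Q : R -> R -> R) : R :=
  lineint P Q (cx h) (cy h) (angB m h u) (2 * PI + angA m h u).

Definition melnikov (m n : nat) (ap bp am bm : nat -> nat -> R) (h u : R) : R :=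
  lint_plus m h u (fun x y => poly2 n bp x y) (fun x y => - poly2 n ap x y)
  + lint_minus m h u (fun x y => poly2 n bm x y) (fun x y => - poly2 n am x y).

Definition Jint (m : nat) (h u : R) (i j : nat) : R :=
  lint_plus m h u (fun x y => x ^ i * y ^ j) (fun _ _ => 0).
Definition Iint (m : nat) (h u : R) (i j : nat) : R :=
  lint_minus m h u (fun x y => x ^ i * y ^ j) (fun _ _ => 0).

(* Main.v *)
Require Import Defs.
From Stdlib Require Import Reals.
From Coquelicot Require Import Coquelicot.
Open Scope R_scope.
From Stdlib Require Import Lra Lia Psatz.

Lemma RInt_plus' f g a b : ex_RInt f a b -> ex_RInt g a b ->
  RInt (fun x => f x + g x) a b = RInt f a b + RInt g a b.
Proof. intros; apply (RInt_plus f g); auto. Qed.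
Lemma RInt_minus' f g a b : ex_RInt f a b -> ex_RInt g a b ->
  RInt (fun x => f x - g x) a b = RInt f a b - RInt g a b.
Proof. intros; apply (RInt_minus f g); auto. Qed.
Lemma RInt_scal' f a b l : ex_RInt f a b ->
  RInt (fun x => l * f x) a b = l * RInt f a b.
Proof. intros; apply (RInt_scal f); auto. Qed.
Lemma ex_RInt_plus' f g a b : ex_RInt f a b -> ex_RInt g a b ->
  ex_RInt (fun x => f x + g x) a b.
Proof. intros; apply (ex_RInt_plus f g); auto. Qed.

Lemma ex_RInt_sum (f : nat -> R -> R) a b N :
  (forall i, ex_RInt (f i) a b) -> ex_RInt (fun t => sum_f_R0 (fun i => f i t) N) a b.
Proof.
  intros H; induction N; simpl.
  - apply H.
  - apply ex_RInt_plus'; auto.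
Qed.

Lemma RInt_sum (f : nat -> R -> R) a b N :
  (forall i, ex_RInt (f i) a b) ->
  RInt (fun t => sum_f_R0 (fun i => f i t) N) a b = sum_f_R0 (fun i => RInt (f i) a b) N.
Proof.
  intros H; induction N; simpl.
  - reflexivity.
  - rewrite RInt_plus'; [rewrite IHN; reflexivity| |apply H].
    apply ex_RInt_sum; auto.
Qed.

Lemma Dcx h t : Derive (cx h) t = cy h t.
Proof. apply is_derive_unique. unfold cx, cy. auto_derive; [trivial|ring]. Qed.
Lemma Dcy h t : Derive (cy h) t = - cx h t.
Proof. apply is_derive_unique. unfold cx, cy. auto_derive; [trivial|ring]. Qed.

Definition Mom h a b i j := RInt (fun t => cx h t ^ i * cy h t ^ j) a b.

Lemma ex_mom h a b i j : ex_RInt (fun t => cx h t ^ i * cy h t ^ j) a b.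
Proof.
  apply (ex_RInt_continuous (V:=R_CompleteNormedModule)); intros z _. apply (ex_derive_continuous (K:=R_AbsRing) (V:=R_NormedModule)).
  unfold cx, cy; auto_derive; trivial.
Qed.

Lemma ibp h a b k :
  Mom h a b (S k) 0 = cx h a ^ k * cy h a - cx h b ^ k * cy h b
     + INR k * Mom h a b (pred k) 2.
Proof.
  assert (E : is_RInt (fun t => INR k * (cx h t ^ pred k * cy h t ^ 2) - cx h t ^ S k * cy h t ^ 0) a b
     (minus (cx h b ^ k * cy h b) (cx h a ^ k * cy h a))).
  { apply (is_RInt_derive (fun t => cx h t ^ k * cy h t)).
    - intros x _. unfold cx, cy. auto_derive; [trivial|]. simpl. ring.
    - intros x _. apply (ex_derive_continuous (K:=R_AbsRing) (V:=R_NormedModule)). unfold cx, cy; auto_derive; trivial. }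
  apply (is_RInt_unique (V:=R_CompleteNormedModule)) in E.
  rewrite RInt_minus' in E; [| apply (ex_RInt_scal _ _ _ _ (ex_mom h a b _ _)) | apply ex_mom].
  rewrite RInt_scal' in E; [|apply ex_mom].
  unfold Mom. unfold minus, plus, opp in E; simpl in E. simpl. lra.
Qed.

Lemma core h U v : 0 < h -> 0 < U -> U ^ 2 + v ^ 2 = h ->
  sqrt h * sin (acos (v / sqrt h)) = U /\ sqrt h * cos (acos (v / sqrt h)) = v.
Proof.
  intros Hh HU Hv.
  assert (Hs : 0 < sqrt h) by (apply sqrt_lt_R0; lra).
  assert (Hss : sqrt h * sqrt h = h) by (apply sqrt_sqrt; lra).
  set (s := sqrt h) in *. set (w := v / s).
  assert (Hw : v = w * s) by (unfold w; field; lra).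
  assert (Hw1 : -1 <= w <= 1).
  { rewrite Hw in Hv. simpl in Hv.
    assert (Q : (s * s) * (1 - w * w) = U * U) by (rewrite Hss; nra).
    assert (0 < s * s) by nra.
    assert (w * w <= 1).
    { destruct (Rle_dec (w*w) 1); auto. exfalso. nra. }
    split; nra. }
  rewrite cos_acos, sin_acos by exact Hw1.
  split; [| rewrite Hw; ring].
  assert (Hr : 0 <= 1 - w²) by (unfold Rsqr; nra).
  pose proof (sqrt_sqrt _ Hr) as Hrr. pose proof (sqrt_pos (1 - w²)) as Hr0.
  set (r := sqrt (1 - w²)) in *. unfold Rsqr in Hrr.
  assert (E : (s * r) * (s * r) = U * U).
  { replace ((s*r)*(s*r)) with ((s*s)*(r*r)) by ring. rewrite Hss, Hrr.
    rewrite Hw in Hv. rewrite <- Hss in Hv. nra. }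
  assert (0 <= s * r) by nra.
  apply Rle_antisym; nra.
Qed.

Lemma negpow U k : (- U) ^ k = (-1) ^ k * U ^ k.
Proof. rewrite <- Rpow_mult_distr. f_equal; ring. Qed.

Lemma sq_pow x m : (x ^ m) ^ 2 = x ^ (2 * m).
Proof. rewrite <- pow_mult, Nat.mul_comm. reflexivity. Qed.

Lemma negpow_sq U m : ((- U) ^ m) ^ 2 = U ^ (2 * m).
Proof.
  rewrite negpow, Rpow_mult_distr, sq_pow, sq_pow, pow_mult.
  replace ((-1)^2) with 1 by ring. rewrite pow1. ring.
Qed.

Lemma endB m h U : 0 < h -> 0 < U -> U ^ 2 + U ^ (2 * m) = h ->
  cx h (angB m h U) = U /\ cy h (angB m h U) = U ^ m.
Proof.
  intros. unfold cx, cy, angB. apply core; auto. rewrite sq_pow; auto.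
Qed.

Lemma endA m h U : 0 < h -> 0 < U -> U ^ 2 + U ^ (2 * m) = h ->
  cx h (angA m h U) = - U /\ cy h (angA m h U) = (- U) ^ m.
Proof.
  intros. unfold cx, cy, angA. rewrite sin_neg, cos_neg.
  destruct (core h U ((-U)^m)) as [E1 E2]; auto.
  rewrite negpow_sq; auto. split; lra.
Qed.

Lemma endA2 m h U : 0 < h -> 0 < U -> U ^ 2 + U ^ (2 * m) = h ->
  cx h (2 * PI + angA m h U) = - U /\ cy h (2 * PI + angA m h U) = (- U) ^ m.
Proof.
  intros. destruct (endA m h U) as [E1 E2]; auto.
  unfold cx, cy in *. rewrite sin_plus, cos_plus, sin_2PI, cos_2PI.
  split; lra.
Qed.

Definition inV m n (u : R -> R) (f : R -> R) := exists rhop rhom c, forall h, 0 < h ->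
  f h = sum2 n (fun i j => rhop i j * Jint m h (u h) i j)
        + sum2 n (fun i j => rhom i j * Iint m h (u h) i j)
        + poly1 (m * (n + 1)) c (u h).

Lemma sum_scal_l k f N : sum_f_R0 (fun i => k * f i) N = k * sum_f_R0 f N.
Proof. induction N; simpl; [ring| rewrite IHN; ring]. Qed.

Lemma sum2_plus n F G : sum2 n (fun i j => F i j + G i j) = sum2 n F + sum2 n G.
Proof.
  unfold sum2. rewrite <- sum_plus. apply sum_eq; intros. apply sum_plus.
Qed.
Lemma sum2_scal n k F : sum2 n (fun i j => k * F i j) = k * sum2 n F.
Proof.
  unfold sum2. rewrite <- sum_scal_l. apply sum_eq; intros. apply sum_scal_l.
Qed.
Lemma poly1_plus d c1 c2 t : poly1 d (fun k => c1 k + c2 k) t = poly1 d c1 t + poly1 d c2 t.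
Proof. unfold poly1. rewrite <- sum_plus. apply sum_eq; intros; ring. Qed.
Lemma poly1_scal d a c t : poly1 d (fun k => a * c k) t = a * poly1 d c t.
Proof. unfold poly1. rewrite <- sum_scal_l. apply sum_eq; intros; ring. Qed.

Lemma V_ext m n u f g : inV m n u g -> (forall h, 0 < h -> f h = g h) -> inV m n u f.
Proof.
  intros [rp [rm [c H]]] E. exists rp, rm, c. intros h Hh. rewrite E, H; auto.
Qed.

Lemma lin2 n a b (F : nat -> nat -> R) :
  sum2 n (fun i j => (a i j + b i j) * F i j) = sum2 n (fun i j => a i j * F i j) + sum2 n (fun i j => b i j * F i j).
Proof. rewrite <- sum2_plus. unfold sum2. apply sum_eq; intros; apply sum_eq; intros; ring. Qed.
Lemma lin2s n k a (F : nat -> nat -> R) :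
  sum2 n (fun i j => (k * a i j) * F i j) = k * sum2 n (fun i j => a i j * F i j).
Proof. rewrite <- sum2_scal. unfold sum2. apply sum_eq; intros; apply sum_eq; intros; ring. Qed.

Lemma V_add m n u f g : inV m n u f -> inV m n u g -> inV m n u (fun h => f h + g h).
Proof.
  intros [rp [rm [c H]]] [rp' [rm' [c' H']]].
  exists (fun i j => rp i j + rp' i j), (fun i j => rm i j + rm' i j), (fun k => c k + c' k).
  intros h Hh. rewrite H, H' by auto. rewrite poly1_plus.
  pose proof (lin2 n rp rp' (fun i j => Jint m h (u h) i j)) as L1.
  pose proof (lin2 n rm rm' (fun i j => Iint m h (u h) i j)) as L2.
  cbv beta in L1, L2. rewrite L1, L2. ring.
Qed.

Lemma V_scal m n u k f : inV m n u f -> inV m n u (fun h => k * f h).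
Proof.
  intros [rp [rm [c H]]].
  exists (fun i j => k * rp i j), (fun i j => k * rm i j), (fun j => k * c j).
  intros h Hh. rewrite H by auto. rewrite poly1_scal.
  pose proof (lin2s n k rp (fun i j => Jint m h (u h) i j)) as L1.
  pose proof (lin2s n k rm (fun i j => Iint m h (u h) i j)) as L2.
  cbv beta in L1, L2. rewrite L1, L2. ring.
Qed.

Lemma sum_z f N : (forall i, f i = 0) -> sum_f_R0 f N = 0.
Proof. intros H; induction N; simpl; rewrite ?IHN, H; ring. Qed.

Lemma V_zero m n u : inV m n u (fun _ => 0).
Proof.
  exists (fun _ _ => 0), (fun _ _ => 0), (fun _ => 0). intros h _.
  unfold sum2, poly1. rewrite !sum_z; intros; try ring; rewrite sum_z; intros; ring.
Qed.

Lemma V_sum m n u (f : nat -> R -> R) N :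
  (forall i, (i <= N)%nat -> inV m n u (f i)) -> inV m n u (fun h => sum_f_R0 (fun i => f i h) N).
Proof.
  induction N; intros H; simpl.
  - apply H; lia.
  - apply (V_add m n u (fun h => sum_f_R0 (fun i => f i h) N) (f (S N))).
    + apply IHN; intros; apply H; lia.
    + apply H; lia.
Qed.

Lemma V_sum2 m n u (f : nat -> nat -> R -> R) :
  (forall i j, (i + j <= n)%nat -> inV m n u (f i j)) -> inV m n u (fun h => sum2 n (fun i j => f i j h)).
Proof.
  intros H. unfold sum2.
  apply (V_sum m n u (fun i h => sum_f_R0 (fun j => f i j h) (n - i)) n).
  intros i Hi. apply (V_sum m n u (fun j h => f i j h) (n - i)).
  intros j Hj. apply H; lia.
Qed.

Definition dl (i k : nat) : R := if Nat.eq_dec i k then 1 else 0.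

Lemma sum_delta0 k F N : (N < k)%nat -> sum_f_R0 (fun i => dl i k * F i) N = 0.
Proof.
  induction N; intros H; simpl.
  - unfold dl; destruct (Nat.eq_dec 0 k); [lia|ring].
  - rewrite IHN by lia. unfold dl; destruct (Nat.eq_dec (S N) k); [lia|ring].
Qed.

Lemma sum_delta k F N : (k <= N)%nat -> sum_f_R0 (fun i => dl i k * F i) N = F k.
Proof.
  induction N; intros H; simpl.
  - unfold dl; destruct (Nat.eq_dec 0 k); [subst; ring|lia].
  - destruct (Nat.eq_dec k (S N)).
    + subst. rewrite sum_delta0 by lia. unfold dl; destruct (Nat.eq_dec (S N) (S N)); [ring|lia].
    + rewrite IHN by lia. unfold dl; destruct (Nat.eq_dec (S N) k); [lia|ring].
Qed.

Lemma sum2_delta n i0 j0 F : (i0 + j0 <= n)%nat ->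
  sum2 n (fun i j => (dl i i0 * dl j j0) * F i j) = F i0 j0.
Proof.
  intros H. unfold sum2.
  rewrite (sum_eq _ (fun i => dl i i0 * sum_f_R0 (fun j => dl j j0 * F i j) (n - i))).
  - rewrite sum_delta by lia. apply sum_delta; lia.
  - intros i _. rewrite <- sum_scal_l. apply sum_eq; intros; ring.
Qed.

Lemma V_J m n u i0 j0 : (i0 + j0 <= n)%nat -> inV m n u (fun h => Jint m h (u h) i0 j0).
Proof.
  intros H. exists (fun i j => dl i i0 * dl j j0), (fun _ _ => 0), (fun _ => 0).
  intros h _. rewrite (sum2_delta n i0 j0 (fun i j => Jint m h (u h) i j)) by auto.
  unfold sum2, poly1. rewrite (sum_z _ n); [|intros; apply sum_z; intros; ring].
  rewrite sum_z; intros; ring.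
Qed.

Lemma V_I m n u i0 j0 : (i0 + j0 <= n)%nat -> inV m n u (fun h => Iint m h (u h) i0 j0).
Proof.
  intros H. exists (fun _ _ => 0), (fun i j => dl i i0 * dl j j0), (fun _ => 0).
  intros h _. rewrite (sum2_delta n i0 j0 (fun i j => Iint m h (u h) i j)) by auto.
  unfold sum2, poly1. rewrite (sum_z _ n); [|intros; apply sum_z; intros; ring].
  rewrite sum_z; intros; ring.
Qed.

Lemma V_mono m n u k a : (k <= m * (n + 1))%nat -> inV m n u (fun h => a * u h ^ k).
Proof.
  intros H. exists (fun _ _ => 0), (fun _ _ => 0), (fun i => dl i k * a).
  intros h _. unfold poly1.
  rewrite (sum_eq _ (fun i => dl i k * (a * u h ^ i))) by (intros; ring).
  rewrite sum_delta by auto.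
  unfold sum2. rewrite !(sum_z _ n); try ring; intros; apply sum_z; intros; ring.
Qed.

Lemma sum_scal_r k f N : sum_f_R0 f N * k = sum_f_R0 (fun i => f i * k) N.
Proof. induction N; simpl; [ring| rewrite <- IHN; ring]. Qed.

Lemma poly_pt n A B X Y :
  poly2 n B X Y * Y + (- poly2 n A X Y) * (- X) =
  sum2 n (fun i j => B i j * (X ^ i * Y ^ S j) + A i j * (X ^ S i * Y ^ j)).
Proof.
  rewrite sum2_plus. unfold poly2, sum2.
  replace ((- sum_f_R0 (fun i => sum_f_R0 (fun j => A i j * X ^ i * Y ^ j) (n - i)) n) * - X)
    with (sum_f_R0 (fun i => sum_f_R0 (fun j => A i j * X ^ i * Y ^ j) (n - i)) n * X) by ring.
  rewrite !sum_scal_r. f_equal; apply sum_eq; intros; rewrite sum_scal_r; apply sum_eq; intros; simpl; ring.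
Qed.

Definition Gterm (A B : nat -> nat -> R) h i j t :=
  B i j * (cx h t ^ i * cy h t ^ S j) + A i j * (cx h t ^ S i * cy h t ^ j).
Definition Grow n A B h i t := sum_f_R0 (fun j => Gterm A B h i j t) (n - i).

Lemma ex_G A B h a b i j : ex_RInt (Gterm A B h i j) a b.
Proof.
  unfold Gterm. apply ex_RInt_plus'.
  - apply (ex_RInt_scal _ _ _ _ (ex_mom h a b _ _)).
  - apply (ex_RInt_scal _ _ _ _ (ex_mom h a b _ _)).
Qed.

Lemma lin_poly n A B h a b :
  lineint (fun x y => poly2 n B x y) (fun x y => - poly2 n A x y) (cx h) (cy h) a b =
  sum2 n (fun i j => B i j * Mom h a b i (S j) + A i j * Mom h a b (S i) j).
Proof.
  unfold lineint.
  transitivity (RInt (fun t => sum_f_R0 (fun i => Grow n A B h i t) n) a b).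
  { apply RInt_ext; intros t _. rewrite Dcx, Dcy. rewrite poly_pt. reflexivity. }
  etransitivity. { apply (RInt_sum (Grow n A B h)). intros i.
    apply (ex_RInt_sum (fun j => Gterm A B h i j)). intros; apply ex_G. }
  unfold sum2. apply sum_eq; intros i _.
  etransitivity. { apply (RInt_sum (fun j => Gterm A B h i j)). intros; apply ex_G. }
  apply sum_eq; intros j _. unfold Gterm, Mom.
  rewrite RInt_plus'; try apply (ex_RInt_scal _ _ _ _ (ex_mom h a b _ _)).
  rewrite !RInt_scal' by apply ex_mom. reflexivity.
Qed.

Lemma Jint_mom m h U i j : Jint m h U i j = Mom h (angA m h U) (angB m h U) i (S j).
Proof.
  unfold Jint, lint_plus, lineint, Mom. apply RInt_ext; intros t _.
  rewrite Dcx, Dcy. simpl. ring.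
Qed.
Lemma Iint_mom m h U i j : Iint m h U i j = Mom h (angB m h U) (2 * PI + angA m h U) i (S j).
Proof.
  unfold Iint, lint_minus, lineint, Mom. apply RInt_ext; intros t _.
  rewrite Dcx, Dcy. simpl. ring.
Qed.

Lemma arc_V m n u (al be : R -> R) :
  (forall i j, (i + j <= n)%nat -> inV m n u (fun h => Mom h (al h) (be h) i (S j))) ->
  (forall i, (i <= n)%nat -> inV m n u (fun h => cx h (al h) ^ i * cy h (al h) - cx h (be h) ^ i * cy h (be h))) ->
  forall i j, (i + j <= n)%nat -> inV m n u (fun h => Mom h (al h) (be h) (S i) j).
Proof.
  intros HK HB i j Hij. destruct j as [|j].
  - eapply V_ext; [| intros h _; apply ibp].
    apply (V_add m n u (fun h => cx h (al h) ^ i * cy h (al h) - cx h (be h) ^ i * cy h (be h))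
             (fun h => INR i * Mom h (al h) (be h) (pred i) 2)).
    + apply HB; lia.
    + destruct i as [|i].
      * eapply V_ext; [apply V_zero|]. intros; simpl; ring.
      * apply (V_scal m n u (INR (S i)) (fun h => Mom h (al h) (be h) i 2)). apply HK; lia.
  - apply HK; lia.
Qed.

Lemma arc_V2 m n u (al be : R -> R) A B :
  (forall i j, (i + j <= n)%nat -> inV m n u (fun h => Mom h (al h) (be h) i (S j))) ->
  (forall i, (i <= n)%nat -> inV m n u (fun h => cx h (al h) ^ i * cy h (al h) - cx h (be h) ^ i * cy h (be h))) ->
  inV m n u (fun h => sum2 n (fun i j => B i j * Mom h (al h) (be h) i (S j) + A i j * Mom h (al h) (be h) (S i) j)).
Proof.
  intros HK HB. apply (V_sum2 m n u (fun i j h => B i j * Mom h (al h) (be h) i (S j) + A i j * Mom h (al h) (be h) (S i) j)).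
  intros i j Hij.
  apply (V_add m n u (fun h => B i j * Mom h (al h) (be h) i (S j)) (fun h => A i j * Mom h (al h) (be h) (S i) j)).
  - apply (V_scal m n u (B i j) (fun h => Mom h (al h) (be h) i (S j))). auto.
  - apply (V_scal m n u (A i j) (fun h => Mom h (al h) (be h) (S i) j)). apply arc_V; auto.
Qed.

Theorem lemma3p2 (m n : nat) (ap bp am bm : nat -> nat -> R) (u : R -> R) :
  (1 <= m)%nat ->
  (forall h, 0 < h -> 0 < u h /\ (u h) ^ 2 + (u h) ^ (2 * m) = h) ->
  exists (rhop rhom : nat -> nat -> R) (c : nat -> R),
    forall h, 0 < h ->
      melnikov m n ap bp am bm h (u h) =
        sum2 n (fun i j => rhop i j * Jint m h (u h) i j)
        + sum2 n (fun i j => rhom i j * Iint m h (u h) i j)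
        + poly1 (m * (n + 1)) c (u h).
Proof.
  intros Hm Hu.
  assert (Hdeg : forall i, (i <= n)%nat -> (i + m <= m * (n + 1))%nat) by (intros; nia).
  assert (HV : inV m n u (fun h =>
     sum2 n (fun i j => bp i j * Mom h (angA m h (u h)) (angB m h (u h)) i (S j)
                       + ap i j * Mom h (angA m h (u h)) (angB m h (u h)) (S i) j)
   + sum2 n (fun i j => bm i j * Mom h (angB m h (u h)) (2 * PI + angA m h (u h)) i (S j)
                       + am i j * Mom h (angB m h (u h)) (2 * PI + angA m h (u h)) (S i) j))).
  { apply V_add.
    - apply (arc_V2 m n u (fun h => angA m h (u h)) (fun h => angB m h (u h))).
      + intros i j Hij. eapply V_ext; [apply (V_J m n u i j Hij)|].
        intros h _. cbv beta. rewrite Jint_mom. reflexivity.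
      + intros i Hi. eapply V_ext.
        { apply (V_add m n u (fun h => (-1) ^ (i + m) * u h ^ (i + m)) (fun h => -1 * u h ^ (i + m)));
          apply V_mono; auto. }
        intros h Hh. destruct (Hu h Hh) as [H1 H2].
        destruct (endA m h (u h) Hh H1 H2) as [E1 E2].
        destruct (endB m h (u h) Hh H1 H2) as [E3 E4].
        rewrite E1, E2, E3, E4, !negpow, !pow_add. ring.
    - apply (arc_V2 m n u (fun h => angB m h (u h)) (fun h => 2 * PI + angA m h (u h))).
      + intros i j Hij. eapply V_ext; [apply (V_I m n u i j Hij)|].
        intros h _. cbv beta. rewrite Iint_mom. reflexivity.
      + intros i Hi. eapply V_ext.
        { apply (V_add m n u (fun h => - (-1) ^ (i + m) * u h ^ (i + m)) (fun h => 1 * u h ^ (i + m)));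
          apply V_mono; auto. }
        intros h Hh. destruct (Hu h Hh) as [H1 H2].
        destruct (endA2 m h (u h) Hh H1 H2) as [E1 E2].
        destruct (endB m h (u h) Hh H1 H2) as [E3 E4].
        rewrite E1, E2, E3, E4, !negpow, !pow_add. ring. }
  destruct HV as [rp [rm [c Hc]]]. exists rp, rm, c. intros h Hh.
  rewrite <- Hc by auto. unfold melnikov, lint_plus, lint_minus.
  rewrite !lin_poly. reflexivity.
Qed.
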